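(* Let $n\ge4$, $i\in[n-2]$ and $m=n-i-1$. Then $$\sum_{k=1}^{i}\frac{q_{n-k,m}}{2}\,(r_{n-k,m}+i-k+1)\, d_{k,n}\,(i-k)! \;=\; \frac{q_{n,m}}{2}\,(r_{n,m}+i+1)\, i!,$$ where $d_{k,n}=|\mathcal D_{k,n}|$.
   Context: $[n]=\{1,\ldots,n\}$. For integers $l$ and $m\ne0$, $q_{l,m}$ and $r_{l,m}$ are the quotient and remainder of $l$ divided by $m$ ($l=q_{l,m}m+r_{l,m}$, $0\le r_{l,m}<m$). A finite set $A\subset\mathbb P$ with $|A|\ge2$ is periodic if the differences between consecutive elements (in increasing order) are all equal. For $n\ge3$, $k\in[n-2]$, $\mathcal D_{k,n}$ is the set of words $u=u_1\cdots u_k$ of $k$ distinct letters of $[n]$ such that $[n]\setminus\{u_1,\ldots,u_k\}$ is periodic and for every $j<k$ the set $[n]\setminus\{u_1,\ldots,u_j\}$ is not periodic. *)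

(* Defs.v *)
From mathcomp Require Import all_boot all_order all_algebra.
Set Implicit Arguments. Unset Strict Implicit. Unset Printing Implicit Defensive.

(* A finite set of positive integers, given as its strictly increasing list
   of elements s, is periodic iff |s| >= 2 and all consecutive differences
   are equal (to the first one). *)
Definition periodic (s : seq nat) : bool :=
  (1 < size s) &&
  all (fun j => nth 0 s j.+1 - nth 0 s j == nth 0 s 1 - nth 0 s 0)
      (iota 0 (size s).-1).

Definition compl (n : nat) (u : seq nat) : seq nat :=
  [seq x <- iota 1 n | x \notin u].

Definition inD (k n : nat) (u : seq nat) : bool :=
  [&& size u == k, uniq u, all (fun x => 1 <= x <= n) u,
      periodic (compl n u) &
      all (fun j => ~~ periodic (compl n (take j u))) (iota 1 k.-1)].

Fixpoint words (k n : nat) : seq (seq nat) :=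
  match k with
  | 0 => [:: [::]]
  | k'.+1 => [seq x :: w | x <- iota 1 n, w <- words k' n]
  end.

Definition d (k n : nat) : nat := count (inD k n) (words k n).

(* Main.v *)
Require Import Defs.
From mathcomp Require Import all_boot all_order all_algebra zify.
Set Implicit Arguments. Unset Strict Implicit. Unset Printing Implicit Defensive.


Lemma count_sumE (T : Type) (a : pred T) (s : seq T) :
  count a s = \sum_(x <- s) (a x : nat).
Proof. by elim: s => [|x s IH]; rewrite ?big_nil ?big_cons //= IH. Qed.

Lemma mem_words j n w :
  (w \in words j n) = (size w == j) && all (fun x => x \in iota 1 n) w.
Proof.
elim: j w => [|j IH] [|x w] //=.
- by apply/negbTE/negP; case/allpairsP => -[y v] /= [_ _].
- apply/idP/idP.
  + by case/allpairsP => -[y v] /= [Hy Hv [-> ->]]; rewrite eqSS Hy /=; move: Hv; rewrite IH.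
  + rewrite eqSS => /and3P[Hs Hx Ha]; apply/allpairsP; exists (x, w) => /=; split=> //.
    by rewrite IH Hs.
Qed.

Lemma uniq_words j n : uniq (words j n).
Proof.
elim: j => [|j IH] //=.
apply: allpairs_uniq => //; first exact: iota_uniq.
by move=> [x1 y1] [x2 y2] _ _ /= [-> ->].
Qed.

Lemma count_perm_words j n X : uniq X -> size X = j -> all (fun x => x \in iota 1 n) X ->
  count (fun w => perm_eq w X) (words j n) = j`!.
Proof.
move=> uX sX aX.
rewrite -size_filter -sX -size_permutations //; apply: perm_size.
apply: uniq_perm; first by rewrite filter_uniq // uniq_words.
  exact: permutations_uniq.
move=> w; rewrite mem_filter mem_permutations mem_words.
case pw: (perm_eq w X) => //=.
rewrite (perm_size pw) sX eqxx /=.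
by apply/allP => x; rewrite (perm_mem pw) => /(allP aX).
Qed.

Lemma count_words_cat (p : pred (seq nat)) k i n : k <= i ->
  count p (words i n) = \sum_(v <- words k n) count (fun w => p (v ++ w)) (words (i - k) n).
Proof.
move=> ki; rewrite -{1}(subnKC ki); move: (i - k) => r.
elim: k p {ki} => [|k IH] p /=.
  by rewrite big_cons big_nil addn0.
rewrite count_sumE !big_allpairs_dep /=.
apply: eq_bigr => x _.
by rewrite -(count_sumE (fun w => p (x :: w))) IH.
Qed.


Definition ap (c D t : nat) := [seq c + D * l | l <- iota 0 t].
Definition cS (S w : seq nat) := [seq x <- S | x \notin w].

Lemma size_ap c D t : size (ap c D t) = t.
Proof. by rewrite size_map size_iota. Qed.

Lemma nth_ap c D t l : l < t -> nth 0 (ap c D t) l = c + D * l.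
Proof. by move=> lt; rewrite (nth_map 0) ?size_iota // nth_iota. Qed.

Lemma periodic_ap c D t : 1 < t -> periodic (ap c D t).
Proof.
move=> t1; rewrite /periodic size_ap t1 /=; apply/allP => l; rewrite mem_iota => /andP[_ Hl].
rewrite !nth_ap; try lia.
Qed.

Lemma periodic_sorted_ap x : sorted ltn x -> periodic x ->
  x = ap (nth 0 x 0) (nth 0 x 1 - nth 0 x 0) (size x).
Proof.
move=> so /andP[s2 /allP pe].
apply: (@eq_from_nth _ 0); first by rewrite size_ap.
move=> l; elim: l => [|l IH] Hl; first by rewrite nth_ap // muln0 addn0.
have h1 := pe l; rewrite mem_iota add0n in h1.
have lt1 : l < (size x).-1 by rewrite -ltnS prednK ?Hl //; apply: leq_trans s2.
have h2 : nth 0 x l < nth 0 x l.+1.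
  by apply: (sorted_ltn_nth ltn_trans 0 so l l.+1) => //; rewrite unfold_in /= ltnW.
have e1 := eqP (h1 lt1).
have IH' := IH (ltnW Hl).
rewrite nth_ap // mulnS; rewrite nth_ap in IH'; last exact: ltnW.
rewrite IH' in h2 e1 *.
move: h2 e1; set D := nth 0 x 1 - nth 0 x 0; move: (D * l) (nth 0 x l.+1) => a b.
lia.
Qed.

Lemma ap_inj c D c' D' t : 1 < t -> (ap c D t == ap c' D' t) = (c == c') && (D == D').
Proof.
move=> t1; apply/eqP/andP => [E|[/eqP-> /eqP->]] //.
have e0 := congr1 (fun s => nth 0 s 0) E; have e1 := congr1 (fun s => nth 0 s 1) E.
rewrite /= !nth_ap in e0 e1; try lia.
Qed.

Lemma size_cS S T : uniq S -> uniq T -> {subset T <= S} ->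
  size (cS S T) = size S - size T.
Proof.
move=> uS uT sub.
have := count_predC (fun x => x \in T) S.
have -> : count (fun x => x \in T) S = size T.
  rewrite -size_filter; apply: perm_size; apply: uniq_perm; rewrite ?filter_uniq //.
  by move=> x; rewrite mem_filter; case xT: (x \in T) => //=; rewrite sub.
by move=> <-; rewrite /cS size_filter addKn.
Qed.

Lemma count_cS_eq j n S T :
  sorted ltn S -> all (fun x => x \in iota 1 n) S -> sorted leq T ->
  size S = j + size T ->
  count (fun w => [&& uniq w, all (fun x => x \in S) w & cS S w == T]) (words j n)
  = (uniq T && all (fun x => x \in S) T) * j`!.
Proof.
move=> soS rS soT sz.
have uS : uniq S by rewrite (sorted_uniq ltn_trans ltnn).
case: (boolP (uniq T && all (fun x => x \in S) T)) => [/andP[uT /allP aT]|bad]; last first.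
  rewrite mul0n; apply/eqP; rewrite -leqn0 leqNgt -has_count; apply/hasP => -[w _].
  case/and3P=> _ _ /eqP E; move: bad; rewrite -E /cS filter_uniq //=.
  by apply/negP/negPn/allP => x; rewrite mem_filter => /andP[].
rewrite mul1n -(count_perm_words (X := cS S T) (n := n)); first last.
- apply/allP => x; rewrite mem_filter => /andP[_ xS]; exact: (allP rS).
- by rewrite (size_cS uS uT aT) sz addnK.
- by rewrite filter_uniq.
apply: eq_in_count => w _.
apply/and3P/idP => [[uw /allP aw /eqP E]|pw].
  apply: uniq_perm => //; first by rewrite filter_uniq.
  move=> x; rewrite mem_filter; apply/idP/andP => [xw|[xT xS]].
    split; last exact: aw.
    by apply/negP => xT; move: xT; rewrite -E mem_filter xw.
  by apply/negPn/negP => xw; move: xT; rewrite -E mem_filter xw xS.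
have ew := perm_mem pw.
split; first by rewrite (perm_uniq pw) filter_uniq.
  by apply/allP => x; rewrite ew mem_filter => /andP[].
apply/eqP; apply: (irr_sorted_eq ltn_trans ltnn).
- by apply: sorted_filter => //; exact: ltn_trans.
- by rewrite ltn_sorted_uniq_leq uT soT.
move=> x; rewrite mem_filter ew mem_filter negb_and negbK.
case xT: (x \in T); first by rewrite aT.
by case: (x \in S).
Qed.


Definition G (s m : nat) := \sum_(a < s.+1) \sum_(dl < s.+1) ((0 < dl) && (a + m * dl < s)).

Lemma sum_eq1 N x0 : x0 < N -> \sum_(x < N) (x0 == x :> nat) = 1.
Proof.
elim: N => [|N IH] //= lt; rewrite big_ord_recr /=.
case: (ltnP x0 N) => h.
  by rewrite IH // (_ : (x0 == N) = false) //; apply/negbTE; rewrite neq_ltn h.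
have -> : x0 = N by lia.
rewrite eqxx big1 // => i _; apply/eqP; rewrite eqb0 neq_ltn ltn_ord orbT //.
Qed.

Lemma sorted_ap c D t : sorted leq (ap c D t).
Proof.
apply: (homo_sorted (e := leq)); last exact: iota_sorted.
by move=> x y h; rewrite leq_add2l leq_mul2l h orbT.
Qed.

Lemma uniq_ap c D t : 1 < t -> uniq (ap c D t) = (0 < D).
Proof.
move=> t1; case: (posnP D) => [->|Dp].
  apply/negbTE/negP => u.
  have s0 : 0 < size (ap c 0 t) by rewrite size_ap; lia.
  have s1 : 1 < size (ap c 0 t) by rewrite size_ap.
  have := nth_uniq 0 s0 s1 u.
  by rewrite !nth_ap //; lia.
rewrite map_inj_uniq ?iota_uniq // => x y /eqP; rewrite eqn_add2l eqn_pmul2l // => /eqP //.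
Qed.

Lemma all_ap a dl t s : 0 < t ->
  all (fun x => x < s) (ap a dl t) = (a + dl * t.-1 < s).
Proof.
move=> t0; rewrite all_map; apply/allP/idP => [h|h l].
  by apply: (h t.-1); rewrite mem_iota; lia.
rewrite mem_iota => /andP[_ lt] /=; apply: leq_ltn_trans h.
by rewrite leq_add2l leq_mul2l; apply/orP; right; lia.
Qed.

Lemma core n j t S : sorted ltn S -> periodic S -> all (fun x => x \in iota 1 n) S ->
  size S = j + t -> 1 < t ->
  count (fun w => [&& uniq w, all (fun x => x \in S) w & periodic (cS S w)]) (words j n)
  = G (j + t) t.-1 * j`!.
Proof.
move=> soS pS rS szS t1.
set s := j + t.
have uS : uniq S by rewrite (sorted_uniq ltn_trans ltnn).
have s2 : 1 < size S by rewrite szS; lia.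
set b := nth 0 S 0; set e := nth 0 S 1 - b.
have ep : 0 < e.
  have := sorted_ltn_nth ltn_trans 0 soS 0 1; rewrite !unfold_in /= => /(_ (ltnW s2) s2 isT).
  rewrite /e /b; lia.
have Sap : S = ap b e s by rewrite /s -szS; exact: periodic_sorted_ap.
pose f := fun x => b + e * x.
have finj : injective f by move=> x y /eqP; rewrite eqn_add2l eqn_pmul2l // => /eqP.
have SE : S = map f (iota 0 s) by [].
have memS x : (f x \in S) = (x < s) by rewrite SE mem_map // mem_iota.
pose T (a dl : nat) := ap (b + e * a) (e * dl) t.
have TE a dl : T a dl = map f (ap a dl t).
  by rewrite /T /ap -map_comp; apply: eq_map => l /=; rewrite /f mulnDr mulnA addnA.
have step1 w : uniq w -> all (fun x => x \in S) w -> size w = j ->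
    (periodic (cS S w) : nat) = \sum_(a < s.+1) \sum_(dl < s.+1) (cS S w == T a dl).
  move=> uw aw sw.
  have szC : size (cS S w) = t.
    by rewrite size_cS //; [rewrite szS sw; lia | exact/allP].
  have soC : sorted ltn (cS S w) by apply: sorted_filter => //; exact: ltn_trans.
  case: (boolP (periodic (cS S w))) => pC; last first.
    rewrite big1 // => a _; rewrite big1 // => dl _.
    apply/eqP; rewrite eqb0; apply: contra pC => /eqP ->; exact: periodic_ap.
  have Cap := periodic_sorted_ap soC pC; rewrite szC in Cap.
  set c0 := nth 0 (cS S w) 0 in Cap; set c1 := nth 0 (cS S w) 1 in Cap.
  have c0S : c0 \in S.
    by have := mem_nth 0 (_ : 0 < size (cS S w)); rewrite mem_filter szC => /(_ (ltnW t1)) /andP[].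
  have c1S : c1 \in S.
    by have := mem_nth 0 (_ : 1 < size (cS S w)); rewrite mem_filter szC => /(_ t1) /andP[].
  have c01 : c0 < c1.
    have := sorted_ltn_nth ltn_trans 0 soC 0 1; rewrite !unfold_in /= szC.
    by move=> /(_ (ltnW t1) t1 isT).
  move: c0S c1S; rewrite {1 2}SE => /mapP[a0 a0s c0E] /mapP[a1 a1s c1E].
  rewrite mem_iota /= in a0s; rewrite mem_iota /= in a1s.
  have a01 : a0 < a1 by move: c01; rewrite c0E c1E /f ltn_add2l ltn_pmul2l.
  have DE : c1 - c0 = e * (a1 - a0) by rewrite c0E c1E /f subnDl mulnBr.
  rewrite Cap DE.
  have key a dl : (ap c0 (e * (a1 - a0)) t == T a dl) = ((a0 == a) && (a1 - a0 == dl)).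
    by rewrite /T ap_inj // c0E /f eqn_add2l !eqn_pmul2l.
  rewrite (eq_bigr (fun a : 'I_s.+1 => (a0 == a) * \sum_(dl < s.+1) (a1 - a0 == dl))); last first.
    by move=> a _; rewrite big_distrr /=; apply: eq_bigr => dl _; rewrite key mulnb.
  rewrite sum_eq1; last lia.
  under eq_bigr do rewrite muln1.
  rewrite sum_eq1 //; lia.
rewrite count_sumE.
transitivity (\sum_(w <- words j n) \sum_(a < s.+1) \sum_(dl < s.+1)
   ([&& uniq w, all (fun x => x \in S) w & cS S w == T a dl] : nat)).
  apply: eq_big_seq => w; rewrite mem_words => /andP[/eqP sw _].
  case: (boolP (uniq w && all (fun x => x \in S) w)) => [/andP[uw aw]|ne].
    by rewrite uw aw /= step1.
  have E c : [&& uniq w, all (fun x => x \in S) w & c] = false.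
    by apply/negbTE; apply: contra ne => /and3P[-> ->].
  rewrite E big1 // => a _; rewrite big1 // => dl _; by rewrite E.
rewrite exchange_big /= /G big_distrl /=; apply: eq_bigr => a _.
rewrite exchange_big /= big_distrl /=; apply: eq_bigr => dl _.
rewrite -count_sumE count_cS_eq //; last by rewrite /T size_ap szS.
  2: exact: sorted_ap.
congr (_ * _); rewrite TE (map_inj_uniq finj) uniq_ap // all_map.
rewrite (eq_all (a2 := fun x => x < s)); last by move=> x /=; rewrite memS.
by rewrite all_ap ?(ltnW t1) // mulnC.
Qed.


Lemma sum_ltn N K : \sum_(a < N) (a < K : nat) = minn N K.
Proof.
elim: N => [|N IH]; first by rewrite big_ord0 min0n.
rewrite big_ord_recr /= IH; case: (ltnP N K) => h; lia.
Qed.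

Definition R m N s := \sum_(dl < N) (s - m * dl.+1).

Lemma R_formula m N s : 0 < m -> s <= m * N -> 2 * R m N s = (s %/ m) * (s %% m + s - m).
Proof.
move=> m0; elim: N s => [|N IH] s hs.
  have -> : s = 0 by lia.
  by rewrite /R big_ord0 div0n.
rewrite /R big_ord_recl /=.
rewrite (eq_bigr (fun i : 'I_N => (s - m) - m * i.+1)); last first.
  by move=> i _; rewrite /bump /= mulnS subnDA.
rewrite -/(R m N (s - m)) mulnDr IH; last by rewrite mulnS in hs; lia.
case: (ltnP s m) => sm.
  have -> : s - m = 0 by lia.
  by rewrite div0n divn_small // muln1 !mul0n addn0; lia.
set s' := s - m.
have -> : s = s' + m by rewrite /s'; lia.
rewrite divnDr ?dvdnn // divnn m0 modnDr.
have := divn_eq s' m; have := ltn_pmod s' m0.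
move: (s' %/ m) (s' %% m) => q r; move=> hr hs'.
have eR : r + (q * m + r + m) - m = r + (q * m + r) by lia.
rewrite hs' /= muln1 addnK addn1 eR; clear hs' eR; case: q => [|q]; first by rewrite !mul0n !add0n addn0 mul1n addnn -mul2n.
have -> : r + (q.+1 * m + r) - m = r + q * m + r by rewrite mulSn; lia.
rewrite !mulSn; idtac "HERE"; nia.
Qed.

Lemma G_formula s m : 0 < m -> 2 * G s m = (s %/ m) * (s %% m + s - m).
Proof.
move=> m0; rewrite -(R_formula (N := s)) //; last by rewrite -{1}(mul1n s) leq_mul2r m0 orbT.
congr (2 * _); rewrite /G exchange_big /= big_ord_recl /= big1; last first.
  by move=> a _.
rewrite add0n; apply: eq_bigr => dl _.
rewrite (eq_bigr (fun a : 'I_s.+1 => (a < s - m * (bump 0 dl)) : nat)); last first.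
  by move=> a _ /=; rewrite ltn_subRL addnC.
rewrite sum_ltn /bump /=; move: (m * _) => x; lia.
Qed.

Lemma first_occ (b : nat -> bool) i :
  \sum_(1 <= k < i.+1) (b k && all (fun j => ~~ b j) (iota 1 k.-1) : nat) = has b (iota 1 i).
Proof.
elim: i => [|i IH]; first by rewrite big_geq.
rewrite big_nat_recr // IH -[i.+1]addn1 iotaD has_cat /= orbF all_predC.
rewrite addn1 add1n /=; by case: (has b _); case: (b _).
Qed.


Definition fcount n i := count (fun u => [&& uniq u, all (fun x => x \in iota 1 n) u
   & periodic (cS (iota 1 n) u)]) (words i n).

Lemma periodic_iota n : 1 < n -> periodic (iota 1 n).
Proof.
move=> n1; rewrite /periodic size_iota n1 /=; apply/allP => l; rewrite mem_iota => /andP[_ hl].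
rewrite !nth_iota; lia.
Qed.

Lemma fA n i : i + 2 <= n -> fcount n i = G n (n - i - 1) * i`!.
Proof.
move=> h; rewrite /fcount (core (t := n - i)).
- by rewrite subnKC ?subn1 -?subnDA //; lia.
- exact: iota_ltn_sorted.
- by apply: periodic_iota; lia.
- by apply/allP.
- rewrite size_iota; lia.
- lia.
Qed.

Lemma cS_cat S v w : cS S (v ++ w) = cS (cS S v) w.
Proof.
by rewrite /cS -filter_predI; apply: eq_filter => x /=; rewrite mem_cat negb_or andbC.
Qed.

Lemma range_iota n v : all (fun x => 1 <= x <= n) v = all (fun x => x \in iota 1 n) v.
Proof. by apply: eq_all => x; rewrite mem_iota add1n ltnS. Qed.

Lemma split_eq n k v w : size v = k -> all (fun x => x \in iota 1 n) v ->
  all (fun x => x \in iota 1 n) w ->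
  [&& uniq (v ++ w), all (fun x => x \in iota 1 n) (v ++ w)
   & periodic (cS (iota 1 n) (v ++ w))] &&
  (periodic (cS (iota 1 n) (take k (v ++ w))) &&
   all (fun j => ~~ periodic (cS (iota 1 n) (take j (v ++ w)))) (iota 1 k.-1))
  = inD k n v && [&& uniq w, all (fun x => x \in cS (iota 1 n) v) w
                   & periodic (cS (cS (iota 1 n) v) w)].
Proof.
move=> sv rv rw.
have -> : take k (v ++ w) = v by rewrite -sv take_size_cat.
have -> : all (fun j => ~~ periodic (cS (iota 1 n) (take j (v ++ w)))) (iota 1 k.-1)
        = all (fun j => ~~ periodic (cS (iota 1 n) (take j v))) (iota 1 k.-1).
  apply: eq_in_all => j; rewrite mem_iota => /andP[_ hj].
  rewrite takel_cat //; rewrite sv; lia.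
have -> : all (fun x => x \in cS (iota 1 n) v) w = ~~ has (fun x => x \in v) w.
  rewrite -all_predC; apply: eq_in_all => x xw.
  by rewrite mem_filter (allP rw x xw) andbT.
rewrite /inD range_iota cat_uniq all_cat rv rw cS_cat sv eqxx /=.
by case: (uniq v); case: (has _ w); case: (uniq w); case: (periodic _); case: (periodic _);
  case: (all _ _).
Qed.

Definition Pn n u := [&& uniq u, all (fun x => x \in iota 1 n) u & periodic (cS (iota 1 n) u)].
Definition Fk n k u := periodic (cS (iota 1 n) (take k u)) &&
   all (fun j => ~~ periodic (cS (iota 1 n) (take j u))) (iota 1 k.-1).

Lemma fB n i : 1 <= i -> i + 2 <= n ->
  fcount n i = \sum_(1 <= k < i.+1) d k n * (G (n - k) (n - i - 1) * (i - k)`!).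
Proof.
move=> i1 h.
set m := n - i - 1.
transitivity (\sum_(u <- words i n) \sum_(1 <= k < i.+1) (Pn n u && Fk n k u : nat)).
  rewrite /fcount count_sumE; apply: eq_big_seq => u; rewrite mem_words => /andP[/eqP su _].
  rewrite (eq_bigr (fun k => Pn n u * Fk n k u)); last by move=> k _; rewrite mulnb.
  rewrite -big_distrr /= /Fk.
  have := first_occ (fun k => periodic (cS (iota 1 n) (take k u))) i; rewrite /= => ->.
  rewrite -/(Pn n u); case Pu: (Pn n u); last by rewrite mul0n.
  rewrite mul1n; apply/esym/eqP; rewrite eqb1; apply/hasP; exists i.
    by rewrite mem_iota; lia.
  by rewrite -su take_size; case/and3P: Pu.
rewrite exchange_big /=; apply: eq_big_nat => k /andP[k1 ki].
rewrite -count_sumE (count_words_cat _ (k := k)); last lia.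
transitivity (\sum_(v <- words k n) (inD k n v : nat) * (G (n - k) m * (i - k)`!));
  last by rewrite -big_distrl /= -count_sumE.
apply: eq_big_seq => v; rewrite mem_words => /andP[/eqP sv rv].
rewrite (eq_in_count (a2 := fun w => inD k n v && [&& uniq w, all (fun x => x \in cS (iota 1 n) v) w
   & periodic (cS (cS (iota 1 n) v) w)])); last first.
  move=> w; rewrite mem_words => /andP[_ rw]; exact: split_eq.
case: (boolP (inD k n v)) => Dv; last first.
  by rewrite mul0n; elim: (words _ _) => //= w ws ->; rewrite (negbTE Dv).
rewrite mul1n.
move: Dv => /and5P[_ uv _ pv _].
rewrite (core (t := n - i)).
- have -> : i - k + (n - i) = n - k by lia.
  by have -> : (n - i).-1 = m by rewrite /m; lia.
- apply: sorted_filter; [exact: ltn_trans | exact: iota_ltn_sorted].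
- exact: pv.
- by apply/allP => x; rewrite mem_filter => /andP[].
- rewrite size_cS ?iota_uniq ?size_iota ?sv //; first lia.
  by move=> x xv; apply: (allP rv).
- lia.
Qed.

Import GRing.Theory.
Local Open Scope ring_scope.

Lemma half_rat (q X g : nat) : (q * X = 2 * g)%N ->
  (q%:R / 2%:R) * X%:R = g%:R :> rat.
Proof.
move=> e; rewrite mulrAC -natrM e natrM mulrAC divff ?mul1r //.
Qed.


Theorem mainTheorem10 (n i : nat) (hn : (4 <= n)%N) (hi1 : (1 <= i)%N)
    (hi2 : (i <= n - 2)%N) :
  let m := (n - i - 1)%N in
  \sum_(1 <= k < i.+1)
     (((n - k) %/ m)%:R / 2%:R) * (((n - k) %% m + i - k + 1)%N)%:R
       * (d k n)%:R * ((i - k)`!)%:R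
  = ((n %/ m)%:R / 2%:R) * ((n %% m + i + 1)%N)%:R * (i`!)%:R :> rat.
Proof.
move=> m.
have m0 : (0 < m)%N by rewrite /m; lia.
have h2 : (i + 2 <= n)%N by lia.
rewrite (half_rat (g := G n m)); last first.
  rewrite G_formula //; congr (_ * _)%N; rewrite /m; lia.
rewrite -!natrM -(fA h2) (fB hi1 h2) natr_sum; apply: eq_big_nat => k /andP[k1 ki].
rewrite (half_rat (g := G (n - k) m)); last first.
  rewrite G_formula //; congr (_ * _)%N; rewrite /m; lia.
by rewrite -!natrM /m mulnA [(G _ _ * d _ _)%N]mulnC.
Qed.
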